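(* Let $R$ be a partially ordered commutative ring. Then (1) $R$ is archimedean if and only if all finitely generated subrings of $R$ are archimedean; (2) $R$ is strongly localizable if and only if all finitely generated subrings of $R$ are strongly localizable.
   Context: Rings are commutative with unit $1$; subrings contain $1$ and carry the induced order ($S^+=S\cap R^+$). A partially ordered commutative ring is a commutative ring with a partial order $\le$ with $r\le s\Rightarrow r+t\le s+t$, whose positive cone $R^+=\{r:0\le r\}$ is closed under multiplication and contains all squares. $\mathbb{N}=\{1,2,\dots\}$. $R$ is archimedean if whenever $g,h\in R$ satisfy $kg+h\in R^+$ for all $k\in\mathbb{N}$, then $g\in R^+$. $\mathrm{Loc}(R)$ is the set of $s\in 1+R^+$ such that for all $r\in R$, $rs\in R^+$ implies $r\in R^+$. $R$ is strongly localizable if $r^2\in R^+$ for all $r\in R$ and $\mathrm{Loc}(R)=1+R^+$. *)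

(* Defs.v *)
From HB Require Import structures.
From mathcomp Require Import all_boot all_algebra.
Set Implicit Arguments. Unset Strict Implicit. Unset Printing Implicit Defensive.
Import GRing.Theory.
Local Open Scope ring_scope.

Record po_comring (R : comPzRingType) (le : R -> R -> Prop) : Prop := {
  po_refl : forall r, le r r;
  po_antisym : forall r s, le r s -> le s r -> r = s;
  po_trans : forall r s t, le r s -> le s t -> le r t;
  po_add : forall r s t, le r s -> le (r + t) (s + t);
  po_mul : forall r s, le 0 r -> le 0 s -> le 0 (r * s);
  po_sq : forall r, le 0 (r * r)
}.

Definition is_subring (R : comPzRingType) (S : R -> Prop) : Prop :=
  [/\ S 1, (forall x y, S x -> S y -> S (x - y)) & (forall x y, S x -> S y -> S (x * y))].

Definition subring_gen (R : comPzRingType) (gens : seq R) (x : R) : Prop :=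
  forall T : R -> Prop, is_subring T -> (forall y, y \in gens -> T y) -> T x.

(* In the following, S is a subring of R carrying the induced order:
   S^+ = S ∩ R^+, i.e. the elements r of S with le 0 r. *)

Definition archimedean_on (R : comPzRingType) (le : R -> R -> Prop) (S : R -> Prop) : Prop :=
  forall g h, S g -> S h ->
    (forall k : nat, (0 < k)%N -> le 0 (g *+ k + h)) -> le 0 g.

Definition Loc_on (R : comPzRingType) (le : R -> R -> Prop) (S : R -> Prop) (s : R) : Prop :=
  (S (s - 1) /\ le 0 (s - 1)) /\
  (forall r, S r -> le 0 (r * s) -> le 0 r).

Definition strongly_localizable_on (R : comPzRingType) (le : R -> R -> Prop) (S : R -> Prop) : Prop :=
  (forall r, S r -> le 0 (r ^+ 2)) /\
  (forall s, Loc_on le S s <-> (S (s - 1) /\ le 0 (s - 1))).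

Definition whole (R : comPzRingType) : R -> Prop := fun _ => True.

(* Main.v *)
Require Import Defs.
From mathcomp Require Import all_boot all_algebra.
Local Open Scope ring_scope.

Lemma sg_in (R : comPzRingType) (gens : seq R) y : y \in gens -> subring_gen gens y.
Proof. by move=> Hy T _ HT; apply: HT. Qed.

Theorem proposition6 (R : comPzRingType) (le : R -> R -> Prop) (HR : po_comring le) :
  (archimedean_on le (@whole R) <->
     (forall gens : seq R, archimedean_on le (subring_gen gens))) /\
  (strongly_localizable_on le (@whole R) <->
     (forall gens : seq R, strongly_localizable_on le (subring_gen gens))).
Proof.
split; split.
- by move=> H gens g h _ _; apply: H.
- move=> H g h _ _ Hk; apply: (H [:: g; h]) Hk.
  + by apply: sg_in; rewrite inE eqxx.
  + by apply: sg_in; rewrite !inE eqxx orbT.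
- move=> [Hsq HL] gens; split; first by move=> r _; apply: Hsq.
  move=> s; split; first by case.
  move=> [Hs1 Hs2]; split; first by [].
  move=> r _ Hrs.
  have [_ H2] := (proj2 (HL s) (conj I Hs2)).
  exact: H2 Hrs.
- move=> H; split.
  + move=> r _; have [H1 _] := H [:: r]; apply: H1.
    by apply: sg_in; rewrite inE eqxx.
  + move=> s; split; first by case.
    move=> [_ Hs2]; split; first by [].
    move=> r _ Hrs.
    have [_ HL] := H [:: s - 1; r].
    have Hs1 : subring_gen [:: s - 1; r] (s - 1) by apply: sg_in; rewrite inE eqxx.
    have [_ H2] := proj2 (HL s) (conj Hs1 Hs2).
    apply: H2 Hrs.
    by apply: sg_in; rewrite !inE eqxx orbT.
Qed.
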